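(* Let $n\ge1$ and let $A_1,\ldots,A_n$ be operators on $\mathbb{C}^{2^n}$ such that $A_x^\dagger=A_x$ and $A_xA_y+A_yA_x=2\delta_{xy}\mathbb{1}$ for all $x,y\in\{1,\ldots,n\}$. Define the steering functional $F=\{F_x^a: x=1,\ldots,n,\ a=1,2\}$ by $F_x^1=\tfrac12A_x$, $F_x^2=-\tfrac12A_x$. Then $$V(F)\ \ge\ \sqrt{\tfrac{n}{2}}.$$
   Context: Here $d=2^n$. An $(n,2,d)$-assemblage is a family $\sigma=\{\sigma_x^a: x=1,\ldots,n,\ a=1,2\}$ of positive semidefinite operators on $\mathbb{C}^d$ such that $\sigma_x^1+\sigma_x^2$ does not depend on $x$ and has trace $1$; $\mathcal{Q}$ is the set of all such assemblages. An assemblage has a local hidden state (LHS) model if there exist a finite index set $\Lambda$, weights $q_\lambda\ge0$ with $\sum_\lambda q_\lambda=1$, density matrices $\sigma_\lambda$ on $\mathbb{C}^d$, and probability distributions $\{p_\lambda(a|x)\}_{a=1,2}$ for each $x,\lambda$, such that $\sigma_x^a=\sum_\lambda q_\lambda p_\lambda(a|x)\sigma_\lambda$ for all $x,a$; $\mathcal{L}$ is the set of such assemblages. For a steering functional $F=\{F_x^a\}$ (a family of $d\times d$ matrices), $\langle F,\sigma\rangle=\mathrm{Tr}\big(\sum_{x,a}F_x^a\sigma_x^a\big)$, $S_{LHS}(F)=\sup\{|\langle F,\sigma\rangle|:\sigma\in\mathcal{L}\}$, $S_Q(F)=\sup\{|\langle F,\sigma\rangle|:\sigma\in\mathcal{Q}\}$,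 and $V(F)=S_Q(F)/S_{LHS}(F)$. *)

(* Defs.v *)
From HB Require Import structures.
From mathcomp Require Import all_boot all_order all_algebra.
From mathcomp Require Import classical_sets reals.
From mathcomp Require Import complex.
Set Implicit Arguments. Unset Strict Implicit. Unset Printing Implicit Defensive.
Import Order.TTheory GRing.Theory Num.Theory.
Local Open Scope ring_scope.

Section Steering.
Variable R : realType.
Local Notation C := R[i].

Definition adjmx m k (M : 'M[C]_(m, k)) : 'M[C]_(k, m) :=
  \matrix_(i, j) (M j i)^*.

(* positive semidefinite: Hermitian with nonnegative quadratic form
   (in the numClosedField order of C, 0 <= z means z is real and >= 0) *)
Definition psd d (M : 'M[C]_d) : Prop :=
  adjmx M = M /\ forall v : 'cV[C]_d, 0 <= (adjmx v *m M *m v) 0 0.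

Definition density d (M : 'M[C]_d) : Prop := psd M /\ \tr M = 1.

(* an (n,2,d)-assemblage: x ranges over 'I_n (= {1..n}), a over 'I_2 (= {1,2}) *)
Definition assemblage n d := 'I_n -> 'I_2 -> 'M[C]_d.

Definition is_quantum n d (s : assemblage n d) : Prop :=
  (forall x a, psd (s x a)) /\
  exists rho : 'M[C]_d, \tr rho = 1 /\ forall x, s x 0 + s x 1 = rho.

(* local hidden state model with a finite hidden-variable set 'I_m *)
Definition is_LHS n d (s : assemblage n d) : Prop :=
  exists (m : nat) (q : 'I_m -> R) (rho : 'I_m -> 'M[C]_d)
         (p : 'I_m -> 'I_n -> 'I_2 -> R),
    (forall l, 0 <= q l) /\ \sum_l q l = 1 /\
    (forall l, density (rho l)) /\
    (forall l x a, 0 <= p l x a) /\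
    (forall l x, p l x 0 + p l x 1 = 1) /\
    (forall x a, s x a = \sum_l (real_complex R (q l * p l x a)) *: rho l).

Definition pairing n d (F s : assemblage n d) : C :=
  \tr (\sum_x \sum_a F x a *m s x a).

Definition S_LHS n d (F : assemblage n d) : R :=
  sup [set r : R | exists s, is_LHS s /\ r = ComplexField.Normc.normc (pairing F s)].

Definition S_Q n d (F : assemblage n d) : R :=
  sup [set r : R | exists s, is_quantum s /\ r = ComplexField.Normc.normc (pairing F s)].

Definition Vratio n d (F : assemblage n d) : R := S_Q F / S_LHS F.

Definition steerF n d (A : 'I_n -> 'M[C]_d) : assemblage n d :=
  fun x a => if a == 0 then (2^-1 : C) *: A x else - ((2^-1 : C) *: A x).

End Steering.

(* Main.v *)
Require Import Defs.
From HB Require Import structures.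
From mathcomp Require Import all_boot all_order all_algebra.
From mathcomp Require Import classical_sets reals.
From mathcomp Require Import complex.
From mathcomp Require Import ring lra.
Import Order.TTheory GRing.Theory Num.Theory.
Local Open Scope ring_scope.

Set Implicit Arguments. Unset Strict Implicit.

Section S.
Variable R : realType.
Local Notation C := R[i].
Local Notation "k %:C" := (real_complex R k) (at level 1, format "k %:C").

Lemma adjmxK m k (M : 'M[C]_(m,k)) : adjmx (adjmx M) = M.
Proof. by apply/matrixP => i j; rewrite !mxE conjCK. Qed.

Lemma adjmxM m k l (M : 'M[C]_(m,k)) (N : 'M[C]_(k,l)) :
  adjmx (M *m N) = adjmx N *m adjmx M.
Proof.
apply/matrixP => i j; rewrite !mxE rmorph_sum; apply: eq_bigr => s _.
by rewrite !mxE rmorphM mulrC.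
Qed.

Lemma adjmxD m k (M N : 'M[C]_(m,k)) : adjmx (M + N) = adjmx M + adjmx N.
Proof. by apply/matrixP => i j; rewrite !mxE rmorphD. Qed.

Lemma adjmxN m k (M : 'M[C]_(m,k)) : adjmx (- M) = - adjmx M.
Proof. by apply/matrixP => i j; rewrite !mxE rmorphN. Qed.

Lemma adjmxZ m k c (M : 'M[C]_(m,k)) : adjmx (c *: M) = c^* *: adjmx M.
Proof. by apply/matrixP => i j; rewrite !mxE rmorphM. Qed.

Lemma adjmx_scalar m (c : C) : adjmx (c%:M : 'M_m) = (c^*)%:M.
Proof.
apply/matrixP => i j; rewrite !mxE eq_sym.
by case: (i == j); rewrite /= ?mulr1n ?mulr0n ?rmorph0.
Qed.

Lemma real_conj (k : R) : (k%:C : C)^* = k%:C.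
Proof. by apply: conj_Creal; apply/complex_realP; exists k. Qed.

Lemma adj_self_ge0 m (v : 'cV[C]_m) : 0 <= (adjmx v *m v) 0 0.
Proof.
rewrite !mxE; apply: sumr_ge0 => i _; rewrite !mxE mulrC; exact: mul_conjC_ge0.
Qed.

Definition psdq d (M : 'M[C]_d) := forall v : 'cV[C]_d, 0 <= (adjmx v *m M *m v) 0 0.

Lemma psd_adjQ d (Q : 'M[C]_d) : psd (adjmx Q *m Q).
Proof.
split; first by rewrite adjmxM adjmxK.
move=> v; rewrite mulmxA -adjmxM -mulmxA; exact: adj_self_ge0.
Qed.

Lemma tr_psd_conj d k (Q : 'M[C]_(k,d)) (rho : 'M[C]_d) : psd rho ->
  0 <= \tr (Q *m rho *m adjmx Q).
Proof.
move=> [_ Hr]; rewrite /mxtrace; apply: sumr_ge0 => i _.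
have := Hr (adjmx (row i Q)); rewrite adjmxK.
suff -> : (row i Q *m rho *m adjmx (row i Q)) 0 0 = (Q *m rho *m adjmx Q) i i by [].
rewrite -row_mul !mxE; apply: eq_bigr => j _; rewrite !mxE.
congr (_ * _); by rewrite !mxE.
Qed.

Definition idem d (P : 'M[C]_d) := adjmx P = P /\ P *m P = P.

Lemma idem_psd d (P : 'M[C]_d) : idem P -> psd P.
Proof. by move=> [H1 H2]; have := psd_adjQ P; rewrite H1 H2. Qed.

Lemma idem_tr d (P rho : 'M[C]_d) : idem P -> psd rho -> 0 <= \tr (P *m rho).
Proof.
move=> [H1 H2] Hr; have := tr_psd_conj P Hr.
by rewrite mxtrace_mulC mulmxA H1 H2.
Qed.

Lemma tr_psd_ge0 d (rho : 'M[C]_d) : psd rho -> 0 <= \tr rho.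
Proof.
move=> Hr; have := @tr_psd_conj d d 1%:M rho Hr.
by rewrite mul1mx adjmx_scalar conjC1 mulmx1.
Qed.

End S.

Section S.
Variable R : realType.
Local Notation C := R[i].
Local Notation "k %:C" := (real_complex R k) (at level 1, format "k %:C").

Lemma idem_of d (B : 'M[C]_d) (k : R) : 0 < k -> adjmx B = B ->
  B *m B = (k^+2)%:C%:M -> idem ((2*k)^-1%:C *: (k%:C%:M + B)).
Proof.
move=> k0 HB HBB; split.
  by rewrite adjmxZ adjmxD adjmx_scalar HB !real_conj.
rewrite -scalemxAl -scalemxAr scalerA.
have -> : (k%:C%:M + B) *m (k%:C%:M + B) = (2 * k)%:C *: (k%:C%:M + B).
  rewrite mulmxDl !mulmxDr HBB !mul_mx_scalar ?mul_scalar_mx.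
  apply/matrixP => i j; rewrite !mxE; case: (i == j) => /=;
    rewrite ?mulr1n ?mulr0n ?rmorphXn ?rmorphM /= ?rmorph_nat; ring.
rewrite scalerA -!rmorphM /= -mulrA mulVf ?mulr1 //.
by apply/lt0r_neq0; rewrite mulr_gt0.
Qed.

End S.

Section S.
Variable R : realType.
Local Notation C := R[i].
Local Notation "k %:C" := (real_complex R k) (at level 1, format "k %:C").

Lemma herm_bound d (B rho : 'M[C]_d) (k : R) : 0 < k -> adjmx B = B ->
  B *m B = (k^+2)%:C%:M -> psd rho ->
  - (k%:C * \tr rho) <= \tr (B *m rho) <= k%:C * \tr rho.
Proof.
move=> k0 HB HBB Hr.
have key : forall B', adjmx B' = B' -> B' *m B' = (k^+2)%:C%:M ->
    0 <= k%:C * \tr rho + \tr (B' *m rho).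
  move=> B' HB' HBB'; have := idem_tr (idem_of k0 HB' HBB') Hr.
  rewrite -scalemxAl mxtraceZ mulmxDl mxtraceD mul_scalar_mx mxtraceZ.
  rewrite pmulr_rge0 // ltcR invr_gt0 mulr_gt0 //.
have h1 := key B HB HBB.
have h2 := key (- B); rewrite adjmxN HB mulNmx mulmxN opprK mulNmx raddfN in h2.
have {}h2 := h2 erefl HBB.
apply/andP; split.
- by rewrite -subr_ge0 opprK addrC.
- by rewrite -subr_ge0.
Qed.

Lemma normc_bound (z : C) (b : R) : - (b%:C) <= z -> z <= b%:C ->
  ComplexField.Normc.normc z <= b.
Proof.
move=> h1 h2.
have zr : z \is Num.real.
  have e : z = (z + b%:C) - b%:C by rewrite addrK.
  rewrite e; apply: rpredB.
    by apply: ger0_real; rewrite -(opprK b%:C) subr_ge0.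
  by apply/complex_realP; exists b.
have : `|z| <= b%:C by rewrite real_ler_norml // h1 h2.
by case: z {h1 h2 zr} => a c; rewrite normc_def lecR.
Qed.

End S.

Section S.
Variable R : realType.
Local Notation C := R[i].
Local Notation "k %:C" := (real_complex R k) (at level 1, format "k %:C").

Lemma pairing_steer n d (A : 'I_n -> 'M[C]_d) (s : assemblage R n d) :
  pairing (steerF A) s =
  \sum_x 2^-1 * (\tr (A x *m s x 0) - \tr (A x *m s x 1)).
Proof.
rewrite /pairing raddf_sum; apply: eq_bigr => x _.
rewrite !big_ord_recl big_ord0 /steerF /= addr0.
rewrite raddfD /= mulNmx raddfN /= -!scalemxAl !mxtraceZ.
rewrite mulrBr; congr (_ * \tr (_ *m s x _) - _ * \tr (_ *m s x _)); exact: val_inj.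
Qed.

Lemma AA_one n d (A : 'I_n -> 'M[C]_d) :
  (forall x y, A x *m A y + A y *m A x = ((x == y)%:R *+ 2)%:M) ->
  forall x, A x *m A x = ((1:R)^+2)%:C%:M.
Proof.
move=> H x; have := H x x; rewrite eqxx expr1n rmorph1 => E.
apply/matrixP => i j; move/matrixP: E => /(_ i j); rewrite !mxE.
move=> E; apply/eqP; rewrite -[_ == _]orFb -(eqrMn2r 2) mulr2n E.
rewrite rmorph1; case: (i == j); rewrite ?mulr0n ?mulr1n ?mul0rn //.
Qed.

End S.

Section S.
Variable R : realType.
Local Notation C := R[i].
Local Notation "k %:C" := (real_complex R k) (at level 1, format "k %:C").

Lemma half_n n : (n%:R / 2 : R)%:C = (2^-1 : C) *+ n.
Proof. by rewrite fmorph_div /= !rmorph_nat mulr_natl. Qed.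

Lemma Q_bound n d (A : 'I_n -> 'M[C]_d) (s : assemblage R n d) :
  (forall x, adjmx (A x) = A x) ->
  (forall x, A x *m A x = ((1:R)^+2)%:C%:M) ->
  is_quantum s ->
  ComplexField.Normc.normc (pairing (steerF A) s) <= n%:R / 2.
Proof.
move=> HA HAA [Hps [rho [trr Hrho]]].
have term : forall x, - 1 <= \tr (A x *m s x 0) - \tr (A x *m s x 1) <= 1.
  move=> x.
  have /andP[l0 u0] := herm_bound ltr01 (HA x) (HAA x) (Hps x 0).
  have /andP[l1 u1] := herm_bound ltr01 (HA x) (HAA x) (Hps x 1).
  rewrite rmorph1 !mul1r in l0 u0 l1 u1.
  have e : \tr (s x 0) + \tr (s x 1) = 1 by rewrite -raddfD /= Hrho.
  apply/andP; split.
    rewrite -e opprD; apply: lerB => //; by rewrite -[X in _ <= X]opprK lerN2.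
  by rewrite -e -[X in _ <= _ + X]opprK; apply: lerB.
have h2 : (0 : C) <= 2^-1 by rewrite invr_ge0 ler0n.
have sc : forall c : C, \sum_(x < n) c = c *+ n by move=> c; rewrite sumr_const card_ord.
rewrite pairing_steer; apply: normc_bound; rewrite half_n.
  rewrite -mulNrn -sc; apply: ler_sum => x _.
  have /andP[l _] := term x.
  by rewrite -mulrN1 ler_wpM2l.
rewrite -sc; apply: ler_sum => x _.
have /andP[_ u] := term x.
by rewrite -[X in _ <= X]mulr1 ler_wpM2l.
Qed.

End S.

Section S.
Variable R : realType.
Local Notation C := R[i].
Local Notation "k %:C" := (real_complex R k) (at level 1, format "k %:C").

Lemma B_sq n d (A : 'I_n -> 'M[C]_d) (c : 'I_n -> R) :
  (forall x y, A x *m A y + A y *m A x = ((x == y)%:R *+ 2)%:M) ->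
  (\sum_x (c x)%:C *: A x) *m (\sum_x (c x)%:C *: A x) = (\sum_x c x ^+ 2)%:C%:M.
Proof.
move=> H.
set f := fun x y => (c x * c y)%:C *: (A x *m A y).
have E1 : (\sum_x (c x)%:C *: A x) *m (\sum_x (c x)%:C *: A x) = \sum_x \sum_y f x y.
  rewrite mulmx_suml; apply: eq_bigr => x _; rewrite mulmx_sumr; apply: eq_bigr => y _.
  by rewrite /f -scalemxAl -scalemxAr scalerA rmorphM.
have E2 : \sum_x \sum_y f x y = \sum_x \sum_y f y x.
  rewrite exchange_big /=; apply: eq_bigr => x _; apply: eq_bigr => y _ //.
have E3 : \sum_x \sum_y (f x y + f y x) = \sum_x ((c x ^+ 2 *+ 2)%:C%:M).
  apply: eq_bigr => x _.
  rewrite (bigD1 x) //= big1 ?addr0.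
    rewrite /f -scalerDr H eqxx scale_scalar_mx; congr (_%:M).
    by rewrite rmorphMn /= -expr2 mulr_natr.
  move=> y /negbTE yx; rewrite /f [c y * _]mulrC -scalerDr H.
  by rewrite eq_sym yx mul0rn scale_scalar_mx mulr0 raddf0.
have E4 : \sum_x ((c x ^+ 2 *+ 2)%:C%:M : 'M[C]_d) = ((\sum_x c x ^+ 2)%:C%:M) *+ 2.
  rewrite [RHS]mulr2n; apply/matrixP => i j; rewrite summxE !mxE.
  under eq_bigr do rewrite mxE.
  case: (i == j); rewrite ?mulr1n ?mulr0n ?addr0; last by rewrite big1.
  rewrite -mulr2n rmorph_sum /= -sumrMnl.
  by apply: eq_bigr => x _; rewrite rmorphMn.
have E5 : (\sum_x \sum_y f x y) *+ 2 = ((\sum_x c x ^+ 2)%:C%:M) *+ 2.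
  rewrite -E4 -E3 mulr2n {2}E2 -big_split /=; apply: eq_bigr => x _.
  by rewrite big_split.
rewrite E1.
have h : forall M : 'M[C]_d, M = (2^-1 : C) *: (M *+ 2).
  have two : (2^-1 : C) + 2^-1 = 1 by rewrite [RHS](splitr 1) mul1r.
  by move=> M; rewrite mulr2n scalerDr -scalerDl two scale1r.
by rewrite (h (\sum_x _)) E5 -h.
Qed.
End S.

Section S.
Variable R : realType.
Local Notation C := R[i].
Local Notation "k %:C" := (real_complex R k) (at level 1, format "k %:C").

Lemma adjmx_sum m k (I : finType) (M : I -> 'M[C]_(m,k)) :
  adjmx (\sum_i M i) = \sum_i adjmx (M i).
Proof.
apply/matrixP => i j; rewrite !mxE !summxE rmorph_sum; apply: eq_bigr => l _.
by rewrite !mxE.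
Qed.

Lemma Bl_bound n d (A : 'I_n -> 'M[C]_d) (c : 'I_n -> R) (rho : 'M[C]_d) :
  (forall x, adjmx (A x) = A x) ->
  (forall x y, A x *m A y + A y *m A x = ((x == y)%:R *+ 2)%:M) ->
  (forall x, c x ^+ 2 <= 1) -> density rho ->
  - (Num.sqrt n%:R)%:C <= \tr ((\sum_x (c x)%:C *: A x) *m rho) <= (Num.sqrt n%:R)%:C.
Proof.
move=> HA H hc [Hr trr].
have Sge0 : 0 <= \sum_x c x ^+ 2 by apply: sumr_ge0 => x _; exact: sqr_ge0.
have sn0 : (0 : C) <= (Num.sqrt n%:R)%:C by rewrite ler0c sqrtr_ge0.
have [S0|Sgt0] := eqVneq (\sum_x c x ^+ 2) 0.
  have c0 : forall x, c x = 0.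
    move=> x; apply/eqP; rewrite -sqrf_eq0; apply/eqP.
    by move/eqP: S0; rewrite psumr_eq0 => [/allP/(_ x (mem_index_enum x))/implyP/(_ isT)/eqP|y _]; rewrite ?sqr_ge0.
  rewrite big1 ?mul0mx ?raddf0; last by move=> x _; rewrite c0 rmorph0 scale0r.
  by rewrite oppr_le0 sn0.
have Sp : 0 < \sum_x c x ^+ 2 by rewrite lt_def Sgt0 Sge0.
set k := Num.sqrt (\sum_x c x ^+ 2).
have k0 : 0 < k by rewrite sqrtr_gt0.
have HB : adjmx (\sum_x (c x)%:C *: A x) = \sum_x (c x)%:C *: A x.
  by rewrite adjmx_sum; apply: eq_bigr => x _; rewrite adjmxZ real_conj HA.
have HBB := B_sq c H.
rewrite -(sqr_sqrtr Sge0) -/k in HBB.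
have /andP[l u] := herm_bound k0 HB HBB Hr.
rewrite trr mulr1 in l u.
have kn : k%:C <= (Num.sqrt n%:R)%:C.
  rewrite lecR; apply: ler_wsqrtr.
  apply: (@le_trans _ _ (\sum_(x < n) (1 : R))).
    by apply: ler_sum => x _; rewrite hc.
  by rewrite sumr_const card_ord.
apply/andP; split.
  by apply: le_trans l; rewrite lerN2.
by apply: le_trans kn.
Qed.

Lemma L_bound n d (A : 'I_n -> 'M[C]_d) (s : assemblage R n d) :
  (forall x, adjmx (A x) = A x) ->
  (forall x y, A x *m A y + A y *m A x = ((x == y)%:R *+ 2)%:M) ->
  is_LHS s ->
  ComplexField.Normc.normc (pairing (steerF A) s) <= Num.sqrt n%:R / 2.
Proof.
move=> HA H [m [q [rho [p [hq [hsum [hd [hp [hp1 hs]]]]]]]]].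
set c := fun l x => p l x 0 - p l x 1.
set K := (Num.sqrt n%:R)%:C.
have E : pairing (steerF A) s =
   2^-1 * \sum_l (q l)%:C * \tr ((\sum_x (c l x)%:C *: A x) *m rho l).
  rewrite pairing_steer.
  transitivity (\sum_x 2^-1 * \sum_l ((q l)%:C * ((c l x)%:C * \tr (A x *m rho l)))).
    apply: eq_bigr => x _; congr (_ * _).
    rewrite (eq_bigr (fun l => (q l * p l x 0)%:C * \tr (A x *m rho l) -
       (q l * p l x 1)%:C * \tr (A x *m rho l))); last first.
      by move=> l _; rewrite /c !rmorphM rmorphB /=; ring.
    rewrite sumrB !hs !mulmx_sumr.
    by congr (_ - _); rewrite raddf_sum /=; apply: eq_bigr => l _; rewrite -scalemxAr mxtraceZ.
  rewrite -mulr_sumr exchange_big /=; congr (_ * _); apply: eq_bigr => l _.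
  rewrite mulmx_suml raddf_sum /= mulr_sumr; apply: eq_bigr => x _.
  by rewrite -scalemxAl mxtraceZ.
have hl : forall l, - K <= \tr ((\sum_x (c l x)%:C *: A x) *m rho l) <= K.
  move=> l; apply: Bl_bound => // x.
  have := hp l x 0; have := hp l x 1; have := hp1 l x; rewrite /c; nra.
have hqC : forall l, (0 : C) <= (q l)%:C by move=> l; rewrite ler0c.
have sq : \sum_l (q l)%:C = 1 by rewrite -rmorph_sum hsum rmorph1.
have h2 : (0 : C) <= 2^-1 by rewrite invr_ge0 ler0n.
have hb : (Num.sqrt n%:R / 2)%:C = 2^-1 * K by rewrite fmorph_div /= rmorph_nat mulrC.
rewrite E; apply: normc_bound; rewrite hb.
  rewrite -mulrN ler_wpM2l //.
  apply: (@le_trans _ _ (\sum_l (q l)%:C * - K)).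
    by rewrite -mulr_suml sq mul1r.
  by apply: ler_sum => l _; rewrite ler_wpM2l //; case/andP: (hl l).
rewrite ler_wpM2l //.
apply: (@le_trans _ _ (\sum_l (q l)%:C * K)).
  by apply: ler_sum => l _; rewrite ler_wpM2l //; case/andP: (hl l).
by rewrite -mulr_suml sq mul1r.
Qed.

End S.

Section S.
Variable R : realType.
Local Notation C := R[i].
Local Notation "k %:C" := (real_complex R k) (at level 1, format "k %:C").

Lemma psd_scale d (M : 'M[C]_d) (r : R) : psd M -> 0 <= r -> psd (r%:C *: M).
Proof.
move=> [HM Hq] r0; split; first by rewrite adjmxZ real_conj HM.
move=> v; rewrite -scalemxAr -scalemxAl mxE mulr_ge0 //; by rewrite ler0c.
Qed.

Lemma normc_real (r : R) : ComplexField.Normc.normc (r%:C) = `|r|.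
Proof. by rewrite /ComplexField.Normc.normc /= expr0n /= addr0 sqrtr_sqr. Qed.

Lemma idem_trP d (P : 'M[C]_d) : idem P -> 0 <= \tr P.
Proof.
move=> HP; have := @idem_tr R d P 1%:M HP.
rewrite mulmx1; apply; apply: idem_psd; split.
  by rewrite adjmx_scalar conjC1.
by rewrite mul1mx.
Qed.

End S.

Section S2.
Variable R : realType.
Local Notation C := R[i].
Local Notation "k %:C" := (real_complex R k) (at level 1, format "k %:C").

Lemma Q_witness n d (A : 'I_n -> 'M[C]_d) : (0 < d)%N ->
  (forall x, adjmx (A x) = A x) ->
  (forall x, A x *m A x = ((1:R)^+2)%:C%:M) ->
  exists s, is_quantum s /\ pairing (steerF A) s = (n%:R / 2)%:C.
Proof.
move=> d0 HA HAA.
have dn0 : (d%:R : C) != 0 by rewrite pnatr_eq0 -lt0n.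
set e : R := (d%:R)^-1.
set h : C := ((2 * 1)^-1)%:C.
pose B x (a : 'I_2) := if a == 0 then A x else - A x.
pose s : assemblage R n d := fun x a => e%:C *: (h *: (1%:C%:M + B x a)).
have HB : forall x a, adjmx (B x a) = B x a.
  by move=> x a; rewrite /B; case: (a == 0); rewrite ?adjmxN HA.
have HBB : forall x a, B x a *m B x a = ((1:R)^+2)%:C%:M.
  by move=> x a; rewrite /B; case: (a == 0); rewrite ?mulNmx ?mulmxN ?opprK HAA.
have eC : e%:C = (d%:R : C)^-1 by rewrite fmorphV /= rmorph_nat.
have hC : h = (2 : C)^-1 by rewrite /h mulr1 fmorphV /= rmorph_nat.
exists s; split.
  split.
    move=> x a; apply: psd_scale; last by rewrite invr_ge0 ler0n.
    exact: idem_psd (idem_of ltr01 (HB x a) (HBB x a)).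
  exists (e%:C *: (h *: (1%:C%:M + 1%:C%:M))); split.
    rewrite !mxtraceZ raddfD /= mxtrace_scalar eC hC rmorph1 -mulr2n.
    by field; exact: dn0.
  move=> x; rewrite /s /B eqxx /= -scalerDr -scalerDr.
  by rewrite addrACA subrr addr0.
rewrite pairing_steer half_n -[n in RHS]card_ord -sumr_const.
apply: eq_bigr => x _.
rewrite /s /B eqxx /= -!scalemxAr !mxtraceZ !mulmxDr mulmxN HAA mul_mx_scalar.
rewrite !raddfD !raddfN /= mxtraceZ mxtrace_scalar eC hC rmorph1.
field.
exact: dn0.
Qed.

End S2.

Section S.
Variable R : realType.
Local Notation C := R[i].
Local Notation "k %:C" := (real_complex R k) (at level 1, format "k %:C").

Lemma L_witness_eps n d (A : 'I_n -> 'M[C]_d) (x0 : 'I_n) (eps : R) :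
  (forall x, adjmx (A x) = A x) ->
  (forall x, A x *m A x = ((1:R)^+2)%:C%:M) ->
  eps ^+ 2 = 1 ->
  \tr (((2 * 1)^-1)%:C *: (1%:C%:M + eps%:C *: A x0)) != 0 ->
  exists s, is_LHS s /\ pairing (steerF A) s = 2^-1.
Proof.
move=> HA HAA e2 tn0.
set B := eps%:C *: A x0.
have HB : adjmx B = B by rewrite adjmxZ real_conj HA.
have HBB : B *m B = ((1:R)^+2)%:C%:M.
  rewrite /B -scalemxAl -scalemxAr HAA scalerA -rmorphM /= -expr2 e2 rmorph1 scale1r.
  by [].
have iP := idem_of ltr01 HB HBB.
set P := ((2 * 1)^-1)%:C *: _ in iP tn0.
have t0 := idem_trP iP.
have [k tk] : exists k, \tr P = k%:C.
  by apply/complex_realP; apply: ger0_real.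
have k0 : 0 < k.
  rewrite lt_def; apply/andP; split.
    by apply: contra tn0; rewrite tk => /eqP ->; rewrite rmorph0.
  by rewrite -ler0c -tk.
set rho := (k^-1)%:C *: P.
have drho : density rho.
  split; first by apply: psd_scale; [exact: idem_psd | rewrite invr_ge0 ltW].
  rewrite mxtraceZ tk -rmorphM mulVf ?rmorph1 //; exact: lt0r_neq0.
pose p := fun (l : 'I_1) (x : 'I_n) (a : 'I_2) =>
  if x == x0 then (if a == 0 then (1 + eps) / 2 else (1 - eps) / 2) else 2^-1.
pose s : assemblage R n d := fun x a => \sum_(l < 1) (1 * p l x a)%:C *: rho.
have hs : forall x a, s x a = (p ord0 x a)%:C *: rho.
  by move=> x a; rewrite /s big_ord1 mul1r.
exists s; split.
  exists 1%N, (fun _ => 1), (fun _ => rho), p.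
  split; first by move=> l; exact: ler01.
  split; first by rewrite big_ord1.
  split; first by [].
  split.
    move=> l x a; rewrite /p; case: (x == x0); last by rewrite invr_ge0 ler0n.
    case: (a == 0); apply: divr_ge0; rewrite ?ler0n //; nra.
  split; last by [].
  move=> l x; rewrite /p; case: (x == x0) => /=; last first.
    by field.
  by field.
rewrite pairing_steer (bigD1 x0) //= big1 ?addr0; last first.
  move=> x /negbTE xx0; rewrite !hs /p xx0.
  by rewrite subrr mulr0.
have p0 : p ord0 x0 0 = (1 + eps) / 2 by rewrite /p !eqxx.
have p1 : p ord0 x0 1 = (1 - eps) / 2 by rewrite /p eqxx.
rewrite !hs p0 p1.
rewrite /= -!(scalemxAr _ (A x0) rho) !mxtraceZ.
have EE : eps%:C * eps%:C = 1 by rewrite -rmorphM -expr2 e2 rmorph1.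
have tP : k%:C = 2^-1 * ((d%:R : C) + eps%:C * \tr (A x0)).
  rewrite -tk /P mxtraceZ raddfD /= (@mxtrace_scalar _ d).
  by rewrite mxtraceZ mulr1 fmorphV /= rmorph_nat rmorph1.
have TE : \tr (A x0 *m rho) = (k%:C)^-1 * (2^-1 * (\tr (A x0) + eps%:C * (d%:R : C))).
  rewrite /rho -scalemxAr mxtraceZ fmorphV /= /P -scalemxAr mxtraceZ.
  rewrite mulmxDr mul_mx_scalar -scalemxAr HAA raddfD /=.
  by rewrite !mxtraceZ (@mxtrace_scalar _ d) expr1n !rmorph1 mul1r mulr1 fmorphV /= rmorph_nat.
have key : eps%:C * (2^-1 * (\tr (A x0) + eps%:C * (d%:R : C))) = k%:C.
  rewrite tP.
  have -> : eps%:C * (2^-1 * (\tr (A x0) + eps%:C * (d%:R : C))) =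
     2^-1 * (eps%:C * \tr (A x0) + (eps%:C * eps%:C) * (d%:R : C)) by ring.
  by rewrite EE mul1r addrC.
have kC : k%:C != 0 by rewrite (inj_eq (@complexI _)) lt0r_neq0.
rewrite TE.
have c0 : ((1 + eps) / 2)%:C = (1 + eps%:C) / 2 by rewrite fmorph_div /= rmorphD /= rmorph1 rmorph_nat.
have c1 : ((1 - eps) / 2)%:C = (1 - eps%:C) / 2 by rewrite fmorph_div /= rmorphB /= rmorph1 rmorph_nat.
rewrite c0 c1.
transitivity (2^-1 * ((k%:C)^-1 * (eps%:C * (2^-1 * (\tr (A x0) + eps%:C * (d%:R : C)))))).
  by field.
by rewrite key mulVf ?mulr1.
Qed.

End S.

Section S.
Variable R : realType.
Local Notation C := R[i].
Local Notation "k %:C" := (real_complex R k) (at level 1, format "k %:C").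

Lemma L_witness n d (A : 'I_n -> 'M[C]_d) (x0 : 'I_n) : (0 < d)%N ->
  (forall x, adjmx (A x) = A x) ->
  (forall x, A x *m A x = ((1:R)^+2)%:C%:M) ->
  exists s, is_LHS s /\ pairing (steerF A) s = 2^-1.
Proof.
move=> d0 HA HAA.
have dn0 : (d%:R : C) != 0 by rewrite pnatr_eq0 -lt0n.
pose t (e : R) := \tr (((2 * 1)^-1)%:C *: (1%:C%:M + e%:C *: A x0)).
have ht : t 1 + t (-1) = d%:R.
  rewrite /t !mxtraceZ !raddfD /= !mxtraceZ (@mxtrace_scalar _ d) rmorphN !rmorph1.
  rewrite mulr1 fmorphV /= rmorph_nat; by field.
have [/eqP t1|t1] := boolP (t 1 == 0).
  apply: (L_witness_eps (x0:=x0) (eps:=-1) HA HAA); first by rewrite sqrrN expr1n.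
  by move: ht; rewrite t1 add0r /t => ->.
by apply: (L_witness_eps (x0:=x0) (eps:=1) HA HAA); rewrite ?expr1n.
Qed.

End S.

Unset Implicit Arguments. Set Strict Implicit.

Theorem theorem2 (R : realType) (n : nat) (A : 'I_n -> 'M[R[i]]_(2 ^ n)) :
  (1 <= n)%N ->
  (forall x, adjmx (A x) = A x) ->
  (forall x y, A x *m A y + A y *m A x = ((x == y)%:R *+ 2)%:M) ->
  Num.sqrt (n%:R / 2 : R) <= Vratio (steerF A).
Proof.
move=> n1 HA H.
have HAA := AA_one H.
have d0 : (0 < 2 ^ n)%N by rewrite expn_gt0.
have [sQ [qs pq]] := Q_witness d0 HA HAA.
have hQ : n%:R / 2 <= S_Q (steerF A).
  apply: sup_upper_bound.
    split.
      exists (n%:R / 2); exists sQ; split => //.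
      by rewrite pq normc_real ger0_norm // divr_ge0 ?ler0n.
    exists (n%:R / 2) => r [s [qs' ->]]; exact: Q_bound.
  exists sQ; split => //.
  by rewrite pq normc_real ger0_norm // divr_ge0 ?ler0n.
have [sL [ls pl]] := L_witness (Ordinal n1) d0 HA HAA.
have e2 : (2^-1 : R[i]) = real_complex R (2^-1) by rewrite fmorphV /= rmorph_nat.
have hL1 : 2^-1 <= S_LHS (steerF A).
  apply: sup_upper_bound.
    split.
      by exists (2^-1); exists sL; split => //; rewrite pl e2 normc_real ger0_norm // invr_ge0 ler0n.
    exists (Num.sqrt n%:R / 2) => r [s [ls' ->]]; exact: L_bound.
  by exists sL; split => //; rewrite pl e2 normc_real ger0_norm // invr_ge0 ler0n.
have hL2 : S_LHS (steerF A) <= Num.sqrt n%:R / 2.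
  apply: ge_sup.
    by exists (2^-1); exists sL; split => //; rewrite pl e2 normc_real ger0_norm // invr_ge0 ler0n.
  move=> r [s [ls' ->]]; exact: L_bound.
have Lpos : 0 < S_LHS (steerF A) by apply: lt_le_trans hL1; rewrite invr_gt0 ltr0n.
rewrite /Vratio ler_pdivlMr //.
have a0 : 0 <= Num.sqrt (n%:R / 2 : R) by exact: sqrtr_ge0.
have b0 : 0 <= Num.sqrt (n%:R : R) by exact: sqrtr_ge0.
have ab : Num.sqrt (n%:R / 2 : R) <= Num.sqrt (n%:R : R).
  apply: ler_wsqrtr; rewrite ler_pdivrMr // ler_peMr ?ler0n //; lra.
have bb : Num.sqrt (n%:R : R) ^+ 2 = n%:R by rewrite sqr_sqrtr ?ler0n.
apply: (le_trans _ hQ).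
apply: (le_trans (ler_wpM2l a0 hL2)).
nra.
Qed.
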